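(* Assume (P1) and (A3). Then for every $q\in\mathbb{R}^n$ and every $p=(p_1,\dots,p_N)$ with $p_i\in\mathbb{R}^n$, the linear system $$\sum_{j=0}^ND_{ij}X_j-A_iX_i=p_i\ (1\le i\le N),\qquad X_0=q,$$ has a unique solution $X_0,\dots,X_N\in\mathbb{R}^n$, and it satisfies $$\|X_j\|_\infty\le 4\|p\|_\infty+2\|q\|_\infty,\qquad 0\le j\le N,$$ where for vectors $\|\cdot\|_\infty$ denotes the maximum absolute entry (for $p$, over all $nN$ entries).
   Context: Radau collocation data: for an integer $N\ge 2$, let $-1<\tau_1<\dots<\tau_N=1$ be the nodes of the $N$-point Gauss–Radau quadrature rule on $[-1,1]$ with fixed node $+1$, and set $\tau_0=-1$. For $0\le j\le N$ let $L_j(\tau)=\prod_{i=0,i\ne j}^{N}\frac{\tau-\tau_i}{\tau_j-\tau_i}$ and let $D$ be the $N\times(N+1)$ matrix $D_{ij}=L_j'(\tau_i)$, $1\le i\le N$, $0\le j\le N$; $D_{1:N}$ denotes the $N\times N$ submatrix formed by columns $1,\dots,N$. For a matrix, $\|\cdot\|_\infty$ is the largest absolute row sum. (P1): $D_{1:N}$ is invertible and $\|D_{1:N}^{-1}\|_\infty\le 2$. Here $f:\mathbb{R}^n\times\mathbb{R}^m\to\mathbb{R}^n$ is continuously differentiable, $(x^*,u^* )$ is a given continuous state–control pair on $[-1,1]$, and $A_i=\nabla_xf(x^*(\tau_i),u^*(\tau_i))$ is the $n\times n$ Jacobian. (A3): $\|\nabla_xf(x^*(t),u^*(t))\|_\infty\le1/4$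 and $\|\nabla_xf(x^*(t),u^*(t))^{\mathsf T}\|_\infty\le1/4$ for all $t\in[-1,1]$. *)

(* Defs.v *)
From HB Require Import structures.
From mathcomp Require Import all_boot all_order all_algebra.
Set Implicit Arguments. Unset Strict Implicit. Unset Printing Implicit Defensive.
Import Order.TTheory GRing.Theory Num.Theory.
Local Open Scope ring_scope.

Section Defs.
Variable R : realFieldType.

(* exact value of int_{-1}^{1} t^k dt *)
Definition mono_int (k : nat) : R := (1 - (-1) ^+ k.+1) / (k.+1)%:R.

(* int_{-1}^{1} p(t) dt for a polynomial p *)
Definition poly_int (p : {poly R}) : R :=
  \sum_(k < size p) p`_k * mono_int k.

(* tau : 'I_N.+1 -> R, tau 0 = -1 (the extra node), tau 1 .. tau N are the
   N-point Gauss-Radau nodes with fixed node +1: strictly increasing, tau N = 1,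
   and there are weights making the rule exact for all polynomials of degree
   <= 2N-2 (the defining property of the N-point Radau rule). *)
Definition radau_nodes (N : nat) (tau : 'I_N.+1 -> R) : Prop :=
  [/\ tau ord0 = -1, tau ord_max = 1,
      (forall i j : 'I_N.+1, (i < j)%N -> tau i < tau j) &
      exists w : 'I_N -> R, forall p : {poly R}, (size p <= (2 * N).-1)%N ->
        \sum_(i < N) w i * p.[tau (lift ord0 i)] = poly_int p].

Definition lagr (N : nat) (tau : 'I_N.+1 -> R) (j : 'I_N.+1) : {poly R} :=
  \prod_(i < N.+1 | i != j) (('X - (tau i)%:P) * ((tau j - tau i)^-1)%:P).

(* D_{ij} = L_j'(tau_i), 1 <= i <= N (row i : 'I_N stands for node i+1) *)
Definition radauD (N : nat) (tau : 'I_N.+1 -> R) : 'M[R]_(N, N.+1) :=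
  \matrix_(i < N, j < N.+1) ((lagr tau j)^`()).[tau (lift ord0 i)].

Definition radauD1N (N : nat) (tau : 'I_N.+1 -> R) : 'M[R]_N :=
  \matrix_(i < N, j < N) radauD tau i (lift ord0 j).

Definition mxnorm_inf (m k : nat) (A : 'M[R]_(m, k)) : R :=
  \big[Num.max/0]_(i < m) \sum_(j < k) `|A i j|.

Definition vnorm_inf (n : nat) (v : 'cV[R]_n) : R :=
  \big[Num.max/0]_(i < n) `|v i 0|.

Definition blocknorm_inf (N n : nat) (p : 'I_N -> 'cV[R]_n) : R :=
  \big[Num.max/0]_(i < N) vnorm_inf (p i).

End Defs.

(* Main.v *)
Require Import Defs.
From HB Require Import structures.
From mathcomp Require Import all_boot all_order all_algebra.
From mathcomp Require Import zify ring lra.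
Set Implicit Arguments. Unset Strict Implicit. Unset Printing Implicit Defensive.
Import Order.TTheory GRing.Theory Num.Theory.
Local Open Scope ring_scope.

Section Lag.
Variables (R : realFieldType) (N : nat) (tau : 'I_N.+1 -> R).
Hypothesis tau_inj : injective tau.

Lemma lagr_eval j k : (lagr tau j).[tau k] = (k == j)%:R.
Proof.
rewrite /lagr horner_prod.
have [->|nkj] := eqVneq k j.
  rewrite big1 // => i ij; rewrite hornerM hornerXsubC hornerC mulfV //.
  by rewrite subr_eq0; apply/eqP => /tau_inj /eqP; rewrite eq_sym (negbTE ij).
rewrite (bigD1 k) //= hornerM hornerXsubC subrr !mul0r //.
Qed.

Lemma lagr_size j : (size (lagr tau j) <= N.+1)%N.
Proof.
rewrite /lagr big_split /= -big_filter.
rewrite -(rmorph_prod (@polyC R)) /=.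
apply: (leq_trans (size_polyMleq _ _)).
rewrite size_prod_XsubC /=.
have h := size_polyC_leq1 (\prod_(i < N.+1 | i != j) (tau j - tau i)^-1).
rewrite size_filter.
have -> : count (fun i => i != j) (index_enum 'I_N.+1) = N.
  rewrite -size_filter [index_enum _]unlock -enumT; have e := cardC1 j; rewrite card_ord /= in e; apply: etrans e; rewrite cardE /enum_mem -enumT. by rewrite filter_predT.
move: h; set z := size _; move=> h; lia.
Qed.

Lemma lagr_sum : \sum_j lagr tau j = 1.
Proof.
apply/eqP; rewrite -subr_eq0; apply/eqP.
apply: (@roots_geq_poly_eq0 _ _ [seq tau k | k <- enum 'I_N.+1]).
- apply/allP => x /mapP [k _ ->]; rewrite /root hornerD hornerN horner_sum hornerC.
  rewrite (bigD1 k) //= big1 ?lagr_eval ?eqxx ?addr0 ?subrr //.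
  by move=> i ik; rewrite lagr_eval eq_sym (negbTE ik).
- by rewrite map_inj_uniq ?enum_uniq.
- rewrite size_map size_enum_ord.
  apply: (leq_trans (size_polyD _ _)); rewrite geq_max size_polyN size_poly1 andbC /=.
  apply: (leq_trans (size_sum _ _ _)).
  elim/big_rec: _ => // i m _ Hm; rewrite geq_max Hm andbT; exact: lagr_size.
Qed.

Lemma rowsum x : \sum_(j < N.+1) (lagr tau j)^`().[x] = 0.
Proof.
rewrite -horner_sum; have -> : \sum_(j < N.+1) (lagr tau j)^`() = (\sum_(j < N.+1) lagr tau j)^`() by rewrite raddf_sum.
by rewrite lagr_sum -polyC1 derivC horner0.
Qed.
End Lag.
Section Norms.
Variable R : realFieldType.

Lemma le_bmax_seq (I : eqType) (r : seq I) (F : I -> R) i :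
  i \in r -> F i <= \big[Num.max/0]_(k <- r) F k.
Proof.
elim: r => //= a r IH; rewrite inE big_cons => /orP[/eqP->|/IH h].
  by rewrite le_max lexx.
by rewrite le_max h orbT.
Qed.

Lemma le_bmax m (F : 'I_m -> R) i : F i <= \big[Num.max/0]_(k < m) F k.
Proof. exact: le_bmax_seq. Qed.

Lemma bmax_le m (F : 'I_m -> R) c :
  0 <= c -> (forall i, F i <= c) -> \big[Num.max/0]_(k < m) F k <= c.
Proof. by move=> c0 h; elim/big_rec: _ => // i x _ hx; rewrite ge_max h. Qed.

Lemma bmax_ge0 m (F : 'I_m -> R) : 0 <= \big[Num.max/0]_(k < m) F k.
Proof. by elim/big_rec: _ => // i x _ hx; rewrite le_max hx orbT. Qed.

Lemma vnorm_ge0 k (v : 'cV[R]_k) : 0 <= vnorm_inf v.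
Proof. exact: bmax_ge0. Qed.

Lemma vnorm_entry k (v : 'cV[R]_k) a : `|v a 0| <= vnorm_inf v.
Proof. by rewrite /vnorm_inf; apply: (le_bmax (fun i => `|v i 0|)). Qed.

Lemma vnorm_leP k (v : 'cV[R]_k) c : 0 <= c -> (forall a, `|v a 0| <= c) ->
  vnorm_inf v <= c.
Proof. by move=> c0 h; apply: bmax_le. Qed.

Lemma mxnorm_row m k (A : 'M[R]_(m, k)) a : \sum_b `|A a b| <= mxnorm_inf A.
Proof. by rewrite /mxnorm_inf; apply: (le_bmax (fun i => \sum_j `|A i j|)). Qed.

Lemma mulmx_entry_le m k (A : 'M[R]_(m, k)) (v : 'cV[R]_k) a :
  `|(A *m v) a 0| <= mxnorm_inf A * vnorm_inf v.
Proof.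
rewrite mxE; apply: (le_trans (ler_norm_sum _ _ _)).
apply: (@le_trans _ _ (\sum_b `|A a b| * vnorm_inf v)).
  apply: ler_sum => b _; rewrite normrM ler_wpM2l // vnorm_entry //.
rewrite -mulr_suml ler_wpM2r ?vnorm_ge0 // mxnorm_row //.
Qed.

Lemma vnorm0_eq k (v : 'cV[R]_k) : vnorm_inf v <= 0 -> v = 0.
Proof.
move=> h; apply/matrixP => a b; rewrite ord1 mxE; apply/eqP.
by rewrite -normr_le0 (le_trans (vnorm_entry _ _) h).
Qed.
End Norms.

Section Est.
Variables (R : realFieldType) (N n : nat) (tau : 'I_N.+1 -> R) (J : R -> 'M[R]_n)
  (Minv : 'M[R]_N).
Hypothesis tau_inj : injective tau.
Hypothesis JB : forall i : 'I_N, mxnorm_inf (J (tau (lift ord0 i))) <= 4^-1.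
Hypothesis HMinv : Minv *m radauD1N tau = 1%:M.
Hypothesis Minvb : mxnorm_inf Minv <= 2.

Definition solP (q : 'cV[R]_n) (p : 'I_N -> 'cV[R]_n) (X : 'I_N.+1 -> 'cV[R]_n) :=
  X ord0 = q /\ forall i : 'I_N,
    \sum_(j < N.+1) radauD tau i j *: X j
      - J (tau (lift ord0 i)) *m X (lift ord0 i) = p i.

Lemma radauD_rowsum i : \sum_(j < N.+1) radauD tau i j = 0.
Proof.
under eq_bigr do rewrite mxE; exact: rowsum.
Qed.

Lemma estimate q p X : solP q p X -> forall j,
  vnorm_inf (X j) <= 4 * blocknorm_inf p + 2 * vnorm_inf q.
Proof.
move=> [X0 HX].
set P := blocknorm_inf p; set Q := vnorm_inf q.
set m' := \big[Num.max/0]_(k < N) vnorm_inf (X (lift ord0 k)).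
have P0 : 0 <= P := bmax_ge0 _.
have Q0 : 0 <= Q := vnorm_ge0 _.
have m0 : 0 <= m' := bmax_ge0 _.
have key : forall (k : 'I_N) (a : 'I_n), `|X (lift ord0 k) a 0| <= Q + 2 * (P + 4^-1 * m').
  move=> k a.
  pose r := \col_i (p i a 0 + (J (tau (lift ord0 i)) *m X (lift ord0 i)) a 0).
  pose z : 'cV[R]_N := \col_k (X (lift ord0 k) a 0 - q a 0).
  have Mz : radauD1N tau *m z = r.
    apply/colP => i; rewrite !mxE.
    have := congr1 (fun v : 'cV[R]_n => v a 0) (HX i).
    rewrite !mxE summxE big_ord_recl X0 /= => <-.
    have := radauD_rowsum i; rewrite big_ord_recl => /eqP; rewrite addr_eq0 => /eqP ->.
    rewrite [(_ *: q) a 0]mxE.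
    rewrite subrK mulNr mulr_suml addrC -sumrB; apply: eq_bigr => j _.
    by rewrite !mxE mulrBr.
  have zr : z = Minv *m r by rewrite -Mz mulmxA HMinv mul1mx.
  have hz : `|z k 0| <= mxnorm_inf Minv * vnorm_inf r by rewrite zr; exact: mulmx_entry_le.
  rewrite mxE in hz.
  have hr : vnorm_inf r <= P + 4^-1 * m'.
    apply: vnorm_leP; first by lra.
    move=> i; rewrite mxE; apply: (le_trans (ler_normD _ _)); apply: lerD.
      apply: (le_trans (vnorm_entry _ _)).
      exact: (le_bmax (fun i => vnorm_inf (p i))).
    apply: (le_trans (mulmx_entry_le _ _ _)).
    apply: (le_trans (ler_wpM2r (vnorm_ge0 _) (JB i))).
    apply: ler_wpM2l; first by rewrite invr_ge0.
    exact: (le_bmax (fun k => vnorm_inf (X (lift ord0 k)))).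
  have -> : X (lift ord0 k) a 0 = (X (lift ord0 k) a 0 - q a 0) + q a 0 by rewrite subrK.
  apply: (le_trans (ler_normD _ _)); rewrite addrC; apply: lerD; first exact: vnorm_entry.
  apply: (le_trans hz); apply: (le_trans (ler_wpM2r (vnorm_ge0 _) Minvb)).
  by apply: ler_wpM2l.
have hm : m' <= Q + 2 * (P + 4^-1 * m').
  apply: bmax_le; first by lra.
  by move=> k; apply: vnorm_leP => [|a]; [lra|exact: key].
have hm' : m' <= 4 * P + 2 * Q by lra.
move=> j; case: (unliftP ord0 j) => [k ->|->].
  exact: le_trans (le_bmax (fun k => vnorm_inf (X (lift ord0 k))) k) hm'.
by rewrite X0; rewrite -/Q; lra.
Qed.

Lemma zero_sol Z : solP 0 (fun _ => 0) Z -> forall j, Z j = 0.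
Proof.
move=> hZ j; apply: vnorm0_eq; apply: (le_trans (estimate hZ j)).
have h0 : vnorm_inf (0 : 'cV[R]_n) <= 0.
  by apply: vnorm_leP => // a; rewrite mxE normr0.
have h1 : blocknorm_inf (fun _ : 'I_N => (0 : 'cV[R]_n)) <= 0 by apply: bmax_le.
lra.
Qed.

Lemma sum_lin m (w F G : 'I_m -> R) c :
  \sum_k w k * (c * F k + G k) = c * \sum_k w k * F k + \sum_k w k * G k.
Proof.
rewrite mulr_sumr -big_split; apply: eq_bigr => k _ /=; ring.
Qed.

Definition Fm (Y : 'M[R]_(n, N)) : 'M[R]_(n, N) :=
  \matrix_(a, i) (\sum_(k < N) radauD tau i (lift ord0 k) * Y a k
     - \sum_(b < n) J (tau (lift ord0 i)) a b * Y b i).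

Fact Fm_lin : linear Fm.
Proof.
move=> c Y Z; rewrite /Fm; set D := radauD tau; clearbody D; apply/matrixP => a i; rewrite !mxE.
under eq_bigr do rewrite !mxE.
under [X in _ - X = _]eq_bigr do rewrite !mxE.
rewrite !sum_lin; ring.
Qed.

HB.instance Definition _ := GRing.isLinear.Build R 'M[R]_(n, N) 'M[R]_(n, N) _ Fm Fm_lin.

Definition mkX (q : 'cV[R]_n) (Y : 'M[R]_(n, N)) (j : 'I_N.+1) : 'cV[R]_n :=
  match unlift ord0 j with Some k => col k Y | None => q end.

Lemma mkX0 q Y : mkX q Y ord0 = q.
Proof. by rewrite /mkX unlift_none. Qed.

Lemma mkXl q Y k : mkX q Y (lift ord0 k) = col k Y.
Proof. by rewrite /mkX liftK. Qed.

Lemma mkX_eq q Y i :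
  \sum_(j < N.+1) radauD tau i j *: mkX q Y j
    - J (tau (lift ord0 i)) *m mkX q Y (lift ord0 i)
  = col i (Fm Y) + radauD tau i ord0 *: q.
Proof.
rewrite big_ord_recl mkX0 mkXl; under eq_bigr do rewrite mkXl.
rewrite /Fm; set D := radauD tau; clearbody D; apply/colP => a; rewrite !mxE summxE.
under eq_bigr do rewrite !mxE.
under [X in _ - X = _]eq_bigr do rewrite mxE.
ring.
Qed.

Lemma Fm_inj Y : Fm Y = 0 -> Y = 0.
Proof.
move=> h.
have s : solP 0 (fun _ => 0) (mkX 0 Y).
  by split; [exact: mkX0 | move=> i; rewrite mkX_eq h col0 scaler0 addr0].
apply/matrixP => a k; have := congr1 (fun v : 'cV[R]_n => v a 0) (zero_sol s (lift ord0 k)).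
by rewrite mkXl !mxE.
Qed.

Lemma exists_sol q p : exists X, solP q p X.
Proof.
pose L := lin_mx Fm.
have uL : L \in unitmx.
  rewrite -row_free_unit; apply: inj_row_free => v.
  rewrite mul_rV_lin => /eqP; rewrite mxvec_eq0 => /eqP /Fm_inj /eqP.
  by rewrite vec_mx_eq0 => /eqP.
pose B : 'M[R]_(n, N) := \matrix_(a, i) (p i - radauD tau i ord0 *: q) a 0.
pose Y := vec_mx (mxvec B *m invmx L).
have FY : Fm Y = B by rewrite /Y -mx_rV_lin mulmxKV // mxvecK.
exists (mkX q Y); split; first exact: mkX0.
move=> i; rewrite mkX_eq FY.
have -> : col i B = p i - radauD tau i ord0 *: q by apply/colP => a; rewrite !mxE.
by rewrite subrK.
Qed.

Lemma uniq_sol q p X Y : solP q p X -> solP q p Y -> forall j, X j = Y j.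
Proof.
move=> [X0 HX] [Y0 HY] j; apply/eqP; rewrite -subr_eq0; apply/eqP.
have s : solP 0 (fun _ => 0) (fun j => X j - Y j).
  split; first by rewrite X0 Y0 subrr.
  move=> i.
  transitivity ((\sum_(j < N.+1) radauD tau i j *: X j - J (tau (lift ord0 i)) *m X (lift ord0 i))
    - (\sum_(j < N.+1) radauD tau i j *: Y j - J (tau (lift ord0 i)) *m Y (lift ord0 i)));
    last by rewrite HX HY subrr.
  rewrite (eq_bigr (fun j => radauD tau i j *: X j - radauD tau i j *: Y j)); last by move=> k _; rewrite scalerBr.
  rewrite sumrB mulmxBr.
  set a := \sum_(j < N.+1) _; set b := \sum_(j < N.+1) _; set c := J _ *m _; set d := J _ *m _.
  by rewrite !opprB addrACA [RHS]addrACA [- b + _]addrC.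
exact: (zero_sol s j).
Qed.
End Est.

Theorem lemma4p1 (R : realFieldType) (N n : nat) (tau : 'I_N.+1 -> R)
    (J : R -> 'M[R]_n) :
  (2 <= N)%N ->
  radau_nodes tau ->
  (* (P1) *)
  radauD1N tau \in unitmx ->
  mxnorm_inf (invmx (radauD1N tau)) <= 2 ->
  (* (A3) *)
  (forall t : R, -1 <= t <= 1 ->
     mxnorm_inf (J t) <= 4^-1 /\ mxnorm_inf (J t)^T <= 4^-1) ->
  forall (q : 'cV[R]_n) (p : 'I_N -> 'cV[R]_n),
  let sol := fun X : 'I_N.+1 -> 'cV[R]_n =>
    X ord0 = q /\
    forall i : 'I_N,
      \sum_(j < N.+1) radauD tau i j *: X j
        - J (tau (lift ord0 i)) *m X (lift ord0 i) = p i in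
  (exists X, sol X) /\
  (forall X Y, sol X -> sol Y -> forall j, X j = Y j) /\
  (forall X, sol X -> forall j : 'I_N.+1,
     vnorm_inf (X j) <= 4 * blocknorm_inf p + 2 * vnorm_inf q).
Proof.
move=> _ [t0 tN tmono _] uM Mb A3 q p sol.
have tle : forall i j : 'I_N.+1, (i <= j)%N -> tau i <= tau j.
  move=> i j; rewrite leq_eqVlt => /orP[/eqP e|lt]; last exact/ltW/tmono.
  by rewrite (val_inj e).
have tinj : injective tau.
  move=> i j e; case: (ltngtP i j) => h.
  - by move: (tmono _ _ h); rewrite e ltxx.
  - by move: (tmono _ _ h); rewrite e ltxx.
  - exact: val_inj.
have JB : forall i : 'I_N, mxnorm_inf (J (tau (lift ord0 i))) <= 4^-1.
  move=> k; have hx : -1 <= tau (lift ord0 k) <= 1.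
    apply/andP; split.
    - rewrite -t0; apply: tle; exact: leq0n.
    - rewrite -tN; apply: tle; rewrite /= -ltnS; exact: ltn_ord.
  exact: (proj1 (A3 _ hx)).
have HM : invmx (radauD1N tau) *m radauD1N tau = 1%:M by rewrite mulVmx.
split; first exact: (exists_sol tinj JB HM Mb).
split; first by move=> X Y; apply: (uniq_sol tinj JB HM Mb).
by move=> X; apply: (estimate tinj JB HM Mb).
Qed.
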